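(* Let $E^3$ and $O^3$ denote the sets of even-parity and odd-parity 3-bit strings and let $A\subseteq E^3$. For $n\ge1$, let Alice, Bob and Carol hold $X=(x_1,\dots,x_n)$, $Y=(y_1,\dots,y_n)$, $Z=(z_1,\dots,z_n)\in\{0,1\}^n$ under the promise that $x_iy_iz_i\in A\cup O^3$ for all $i$, and let $g_A(X,Y,Z)=\bigoplus_{i=1}^n t_A(x_iy_iz_i)$, where $t_A(w)=1$ if $w\in A$ and $0$ otherwise. Then $g_A$ can be computed by a distributed protocol using only local classical operations, no a priori quantum entanglement, and two classical bits of communication in total, at the end of which Alice knows the value of $g_A(X,Y,Z)$. *)

(* Defs.v *)
From mathcomp Require Import all_boot.
Set Implicit Arguments. Unset Strict Implicit. Unset Printing Implicit Defensive.

Definition bits3 := (bool * bool * bool)%type.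

Definition parity (w : bits3) : bool :=
  let: (a, b, c) := w in addb (addb a b) c.

Definition E3 : {set bits3} := [set w | ~~ parity w].
Definition O3 : {set bits3} := [set w | parity w].

Definition tA (A : {set bits3}) (w : bits3) : bool := w \in A.

Definition gA (A : {set bits3}) (n : nat) (X Y Z : {ffun 'I_n -> bool}) : bool :=
  \big[addb/false]_(i < n) tA A (X i, Y i, Z i).

(* Deterministic classical three-party communication protocols (no shared
   entanglement, no shared randomness), number-in-hand, broadcast model:
   at each internal node a party sends one classical bit, computed locally
   from its own input (and the transcript so far, encoded by the position
   in the tree).  At a leaf, Alice outputs a bit computed from her own input
   and the transcript (again encoded by the leaf position). *)
Inductive party := Alice | Bob | Carol.

Inductive protocol (T : Type) : Type :=
| Leaf : (T -> bool) -> protocol T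
| Node : party -> (T -> bool) -> protocol T -> protocol T -> protocol T.

Definition input_of (T : Type) (s : party) (x y z : T) : T :=
  match s with Alice => x | Bob => y | Carol => z end.

Fixpoint run (T : Type) (p : protocol T) (x y z : T) : bool :=
  match p with
  | Leaf f => f x
  | Node s m p0 p1 => if m (input_of s x y z) then run p1 x y z else run p0 x y z
  end.

Fixpoint cost (T : Type) (p : protocol T) : nat :=
  match p with
  | Leaf _ => 0
  | Node _ _ p0 p1 => (maxn (cost p0) (cost p1)).+1
  end.

(* Main.v *)
Require Import Defs.
From mathcomp Require Import all_boot.

Definition sb (n : nat) (X : {ffun 'I_n -> bool}) : bool := \big[addb/false]_(i < n) X i.

Lemma sum_true n : \big[addb/false]_(i < n) true = odd n.
Proof.
rewrite big_const_ord; elim: n => //= n ->; by case: (odd n).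
Qed.

Theorem corollary3 (A : {set bits3}) (HA : A \subset E3) (n : nat) (Hn : 0 < n) :
  exists p : protocol {ffun 'I_n -> bool},
    cost p <= 2 /\
    forall X Y Z : {ffun 'I_n -> bool},
      (forall i : 'I_n, (X i, Y i, Z i) \in A :|: O3) ->
      run p X Y Z = gA A X Y Z.
Proof.
pose leaf (b c : bool) := Leaf (fun X : {ffun 'I_n -> bool} => odd n (+) sb n X (+) b (+) c).
exists (Node Bob (sb n) (Node Carol (sb n) (leaf false false) (leaf false true))
                         (Node Carol (sb n) (leaf true false) (leaf true true))).
split; first by [].
move=> X Y Z H.
have HT : forall i, tA A (X i, Y i, Z i) = true (+) (X i (+) Y i (+) Z i).
  move=> i; have := H i; rewrite /tA in_setU /O3 inE /=.
  case/orP => [hA|hO].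
    rewrite hA; have := subsetP HA _ hA; rewrite /E3 inE /=.
    by case: (X i) (Y i) (Z i) => [] [] [].
  have -> : ((X i, Y i, Z i) \in A) = false.
    apply/negP => hA; have := subsetP HA _ hA; rewrite /E3 inE /= hO //.
  by move: hO; case: (X i) (Y i) (Z i) => [] [] [].
have -> : gA A X Y Z = odd n (+) sb n X (+) sb n Y (+) sb n Z.
  rewrite /gA (eq_bigr _ (fun i _ => HT i)) big_split /= sum_true.
  rewrite big_split /= big_split /= /sb.
  by case: (odd n) (\big[addb/false]_(i < n) X i) (\big[addb/false]_(i < n) Y i) (\big[addb/false]_(i < n) Z i) => [] [] [] [].
rewrite /=; by case: (sb n Y); case: (sb n Z); rewrite /= ?addbF ?addbT.
Qed.
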